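(* Let $\mathbf{P}=(P,\le,\mathcal T)$ be a $2$-separated topological poset, and let $F$ be a closed filter in $\mathbf{P}^*$. Put $B=\bigcap F$. Then $$F=\{x\in\mathbf{P}^*: B\subseteq x\}.$$ In particular, $B\neq\emptyset$.
   Context: A topological poset $(P,\le,\mathcal T)$ is a poset with a Hausdorff topology; it is $2$-separated if it admits a continuous order-embedding ($x\le y\iff f(x)\le f(y)$, $f$ injective) into a power of the two-element chain $\{0<1\}$ with the product topology. A final segment is an upward-closed subset of $P$. $\mathbf{P}^*$ denotes the set of continuous order-preserving maps $P\to\{0,1\}$, identified with the clopen final segments of $P$ (via preimage of $1$), a lattice under $\cup,\cap$, with the topology of pointwise convergence (subspace of $\{0,1\}^P$). A filter in $\mathbf{P}^*$ is a nonempty subset closed under finite intersections and under supersets within $\mathbf{P}^*$, not containing $\emptyset$; it is closed if it is closed in this topology. *)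

(* Defs.v *)
From HB Require Import structures.
From mathcomp Require Import all_boot all_order all_algebra.
From mathcomp Require Import all_classical all_reals all_analysis.
Set Implicit Arguments. Unset Strict Implicit. Unset Printing Implicit Defensive.
Local Open Scope classical_set_scope.

Definition poset_rel (T : Type) (le : T -> T -> Prop) : Prop :=
  (forall x, le x x) /\
  (forall x y, le x y -> le y x -> x = y) /\
  (forall x y z, le x y -> le y z -> le x z).

(* 2-separated: a continuous order-embedding into a power {0<1}^I of the
   two-element chain (bool, discrete topology, false < true) with the product
   topology ({ptws I -> bool}). *)
Definition two_separated (T : topologicalType) (le : T -> T -> Prop) : Prop :=
  exists (I : Type) (f : T -> {ptws I -> bool}),
    continuous f /\ injective f /\
    (forall x y, le x y <-> (forall i, f x i ==> f y i)).

(* P^* : continuous order-preserving maps P -> {0,1}, i.e. (characteristic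
   functions of) clopen final segments; as a subset of {0,1}^P. *)
Definition Pstar (T : topologicalType) (le : T -> T -> Prop)
  : set {ptws T -> bool} :=
  [set g | continuous (g : T -> bool) /\ (forall x y, le x y -> g x ==> g y)].

Definition seg_sub (T : Type) (g h : T -> bool) : Prop :=
  forall p, g p -> h p.

Definition Pstar_filter (T : topologicalType) (le : T -> T -> Prop)
  (F : set {ptws T -> bool}) : Prop :=
  F `<=` Pstar le /\
  F !=set0 /\
  (forall g h, F g -> F h -> F (fun p => g p && h p)) /\
  (forall g h, F g -> Pstar le h -> seg_sub g h -> F h) /\
  ~ F (fun _ => false).

Definition Pstar_closed (T : topologicalType) (le : T -> T -> Prop)
  (F : set {ptws T -> bool}) : Prop :=
  exists C : set {ptws T -> bool}, closed C /\ F = C `&` Pstar le.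

(* Main.v *)
Require Import Defs.
From HB Require Import structures.
From mathcomp Require Import all_boot all_order all_algebra.
From mathcomp Require Import all_classical all_reals all_analysis.
Local Open Scope classical_set_scope.

Lemma cont_orb (T : topologicalType) (f g : T -> bool) :
  continuous f -> continuous g -> continuous (fun p => f p || g p).
Proof.
move=> cf cg x; apply/discrete_cvg.
have /discrete_cvg Hf := cf x; have /discrete_cvg Hg := cg x.
have HI : nbhs x (f @^-1` [set f x] `&` g @^-1` [set g x]) by exact: filterI.
apply: (filterS _ HI) => y [/= -> ->] //.
Qed.

Theorem mainTheorem14 (T : topologicalType) (le : T -> T -> Prop)
  (F : set {ptws T -> bool}) :
  poset_rel le -> hausdorff_space T -> two_separated le ->
  Pstar_filter le F -> Pstar_closed le F ->
  let B := [set p : T | forall g, F g -> g p] in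
  F = [set g | Pstar le g /\ B `<=` [set p | g p]] /\ B !=set0.
Proof.
move=> _ _ _ [FP [[h0 Fh0] [FI [FU Fn0]]]] [C [cC FC]] B.
have key : forall g : {ptws T -> bool}, Pstar le g -> B `<=` [set p | g p] -> F g.
  move=> g Pg Bg.
  pose U (h : {ptws T -> bool}) := [set k : {ptws T -> bool} |
     exists2 h', F h' /\ seg_sub h' h & k = (fun p => h' p || g p)].
  have UF : forall h k, U h k -> F k.
    move=> h k [h' [Fh' _] ->]; apply: (FU h') => //; last by move=> p /= ->.
    have [c1 o1] := FP _ Fh'; have [c2 o2] := Pg.
    split; first exact: cont_orb.
    move=> x y lxy; apply/implyP => /orP [hx|gx]; apply/orP.
      by left; exact: (implyP (o1 _ _ lxy) hx).
    by right; exact: (implyP (o2 _ _ lxy) gx).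
  have Pf : ProperFilter (filter_from F U).
    apply: filter_from_proper; last first.
      by move=> h Fh; exists (fun p => h p || g p); exists h => //; split.
    apply: filter_from_filter; first by exists h0.
    move=> i j Fi Fj; exists (fun p => i p && j p); first exact: FI.
    move=> k [h' [Fh' sh] ->]; split; exists h' => //; split => // p /sh /andP[] //.
  rewrite FC; split => //; apply: cC; rewrite closureEcvg.
  exists (filter_from F U) => //; split; last first.
    move=> A CA; exists h0 => // k Uk; apply: CA.
    by have := UF _ _ Uk; rewrite FC => -[].
  apply/pointwise_cvgP => t; apply/discrete_cvg.
  case gt: (g t).
    by exists h0 => // k [h' _ ->]; rewrite /= gt orbT.
  have [h [Fh ht]] : exists h, F h /\ ~~ h t.
    case: (pselect (exists h, F h /\ ~~ h t)) => // nh.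
    suff : g t by rewrite gt.
    apply: Bg => h Fh; apply/negPn/negP => nht; apply: nh; by exists h.
  exists h => // k [h' [_ sh] ->] /=; rewrite gt orbF.
  by apply/negP => /sh; apply/negP.
split.
  apply/seteqP; split => g.
    by move=> Fg; split; [exact: FP|move=> p Bp; exact: Bp].
  by move=> [Pg Bg]; exact: key.
case: (pselect (B !=set0)) => // nB; exfalso; apply: Fn0; apply: key.
  by split; [exact: cst_continuous|by []].
by move=> p Bp; case: nB; exists p.
Qed.
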